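(* Let $(G,L,v)$ be a reachable triple and $D$ a nonnegative integer. Then for every color $i\in[4]$ such that $i\in L(u)$ for some neighbor $u$ of $v$ in $G$: (1) if $\deg_G(v)=2$, then $P(G,L,v,i,D)\le\frac{12}{25}$; (2) if $\deg_G(v)=1$, then $P(G,L,v,i,D)\le\frac{6}{13}$.
   Context: Colors are $[4]=\{1,2,3,4\}$. A list-coloring instance $(G,L)$ is a finite simple graph $G=(V,E)$ with $L:V\to 2^{[4]}$. For a vertex $v$, $G_v$ is $G$ with $v$ and its incident edges removed, and $G_{v,w}=(G_v)_w$. If $v$ has neighbors $v_1,\dots,v_d$ (in a fixed order), then for $k\in[d]$ and a color $j$, $L_{k,j}$ is the list assignment on $G_v$ with $L_{k,j}(v_\ell)=L(v_\ell)\setminus\{j\}$ for $\ell<k$ and $L_{k,j}(u)=L(u)$ for all other vertices $u$ (so $L_{1,j}=L$). A triple $(G,L,v)$ with $v\in V$ is reachable if $\deg_G(u)\le3$ and $|L(u)|\ge\deg_G(u)+1$ for every $u\in V$, and moreover $\deg_G(v)\le2$ and $|L(v)|\ge\deg_G(v)+2$. The procedure $P(G,L,v,i,D)$ ($i\in[4]$, $D$ an integer) is defined recursively (empty products equal $1$): (a) If $i\notin L(v)$, return $0$. Otherwise, if $D\le 0$ or $\deg_G(v)=0$, return $1/|L(v)|$. (b) If $\deg_G(v)=1$ with neighbor $v_1$: let $x=P(G_v,L,v_1,i,D-1)$. If $|L(v)|=2$, say $L(v)=\{i,j\}$, let $y=P(G_v,L,v_1,j,D-1)$ and return $\frac{1-x}{2-x-y}$.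 If $|L(v)|=4$, return $\frac{1-x}{3}$. If $|L(v)|=3$, let $j$ be the unique color in $[4]\setminus L(v)$, $y=P(G_v,L,v_1,j,D-1)$, and return $\frac{1-x}{2+y}$. (c) If $\deg_G(v)=2$: order its neighbors $v_1,v_2$ so that $\deg_G(v_1)\ge\deg_G(v_2)$ and, if $\deg_G(v_1)=\deg_G(v_2)=1$, so that $i\notin L(v_1)$ implies $i\notin L(v_2)$. Let $u_1,\dots,u_{d_1}$ be the neighbors of $v_1$ in $G_v$ (fixed order) and for $k\in[d_1]$, $w\in[4]$ let $L'_{k,w}$ be the list assignment on $G_{v,v_1}$ with $L'_{k,w}(u_\ell)=L(u_\ell)\setminus\{w\}$ for $\ell<k$ and $L'_{k,w}(u)=L(u)$ otherwise. Set $x_{k,w}=P(G_{v,v_1},L'_{k,w},u_k,w,D-1)$ for $k\in[d_1]$, $w\in L(v_1)$. For $j\in L(v)$ set $f_j=0$ if $j\notin L(v_1)$ and otherwise $f_j=\frac{\prod_{k=1}^{d_1}(1-x_{k,j})}{\sum_{w\in L(v_1)}\prod_{k=1}^{d_1}(1-x_{k,w})}$, and set $y_j=P(G_v,L_{2,j},v_2,j,D-1)$. Return $\frac{(1-f_i)(1-y_i)}{\sum_{j\in L(v)}(1-f_j)(1-y_j)}$. (d) If $\deg_G(v)=3$ with neighbors $v_1,v_2,v_3$: for $j\in L(v)$ let $x_j=P(G_v,L_{1,j},v_1,j,D-1)$, $y_j=P(G_v,L_{2,j},v_2,j,D-1)$, $z_j=P(G_v,L_{3,j},v_3,j,D-1)$,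 and return $\frac{(1-x_i)(1-y_i)(1-z_i)}{\sum_{j\in L(v)}(1-x_j)(1-y_j)(1-z_j)}$. For reachable triples, all recursive calls are again on reachable triples and case (d) never occurs. *)

(* Defs.v *)
From HB Require Import structures.
From mathcomp Require Import all_boot all_order all_algebra.
Set Implicit Arguments. Unset Strict Implicit. Unset Printing Implicit Defensive.
Import Order.TTheory GRing.Theory Num.Theory.
Local Open Scope ring_scope.

(* Colors [4] = {1,2,3,4} are represented by 'I_4 = {0,1,2,3} (color c <-> c+1). *)
Definition color := 'I_4.

(* A finite graph: a finite list of vertices (natural numbers) and an
   adjacency relation; only edges between listed vertices count. *)
Record graph := Graph { gV : seq nat; gE : rel nat }.

Definition simple_graph (G : graph) : Prop :=
  uniq (gV G) /\ symmetric (gE G) /\ irreflexive (gE G).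

Definition nbrs (G : graph) (v : nat) : seq nat := [seq u <- gV G | gE G v u].
Definition deg (G : graph) (v : nat) : nat := size (nbrs G v).

Definition delv (G : graph) (v : nat) : graph :=
  Graph [seq u <- gV G | u != v] (gE G).

Definition lists := nat -> {set color}.

(* remove color j from the lists of the first k vertices of s (0-based count);
   so L_{k,j} (1-based k, as in the paper) is  restr L s (k-1) j. *)
Definition restr (L : lists) (s : seq nat) (k : nat) (j : color) : lists :=
  fun u => if u \in take k s then L u :\ j else L u.

(* A "fixed order" of neighbours: an oracle listing the neighbours of v in G. *)
Definition order_oracle := graph -> nat -> seq nat.
Definition valid_oracle (ord : order_oracle) : Prop :=
  forall G v, perm_eq (ord G v) (nbrs G v).

Definition reachable (G : graph) (L : lists) (v : nat) : Prop :=
  simple_graph G /\ v \in gV G /\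
  (forall u, u \in gV G -> (deg G u <= 3)%N /\ (deg G u + 1 <= #|L u|)%N) /\
  (deg G v <= 2)%N /\ (deg G v + 2 <= #|L v|)%N.

Fixpoint P (ord : order_oracle) (D : nat) (G : graph) (L : lists) (v : nat)
  (i : color) {struct D} : rat :=
  if i \notin L v then 0 else
  match D with
  | 0%N => (#|L v|%:R)^-1
  | D'.+1 =>
    let s := ord G v in
    let Gv := delv G v in
    match deg G v with
    | 0%N => (#|L v|%:R)^-1
    | 1%N =>
      let v1 := nth 0%N s 0 in
      let x := P ord D' Gv L v1 i in
      if #|L v| == 2%N then
        let j := odflt i [pick j in L v :\ i] in
        let y := P ord D' Gv L v1 j in
        (1 - x) / (2 - x - y)
      else if #|L v| == 4%N then (1 - x) / 3
      else if #|L v| == 3%N then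
        let j := odflt i [pick j in ~: L v] in
        let y := P ord D' Gv L v1 j in
        (1 - x) / (2 + y)
      else (#|L v|%:R)^-1 (* does not occur for reachable triples *)
    | 2%N =>
      let a := nth 0%N s 0 in
      let b := nth 0%N s 1 in
      let ok := (deg G b <= deg G a)%N &&
                (((deg G a == 1%N) && (deg G b == 1%N)) ==>
                 ((i \notin L a) ==> (i \notin L b))) in
      let v1 := if ok then a else b in
      let v2 := if ok then b else a in
      let Gvv1 := delv Gv v1 in
      let us := ord Gv v1 in
      let d1 := deg Gv v1 in
      (* x k w = x_{k+1,w} of the paper (k 0-based) *)
      let x (k : nat) (w : color) :=
        P ord D' Gvv1 (restr L us k w) (nth 0%N us k) w in
      let pr (w : color) := \prod_(k < d1) (1 - x k w) in
      let f (j : color) :=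
        if j \in L v1 then pr j / \sum_(w in L v1) pr w else 0 in
      let y (j : color) := P ord D' Gv (restr L [:: v1; v2] 1 j) v2 j in
      (1 - f i) * (1 - y i) / \sum_(j in L v) (1 - f j) * (1 - y j)
    | 3%N =>
      let x (j : color) := P ord D' Gv (restr L s 0 j) (nth 0%N s 0) j in
      let y (j : color) := P ord D' Gv (restr L s 1 j) (nth 0%N s 1) j in
      let z (j : color) := P ord D' Gv (restr L s 2 j) (nth 0%N s 2) j in
      (1 - x i) * (1 - y i) * (1 - z i) /
        \sum_(j in L v) (1 - x j) * (1 - y j) * (1 - z j)
    | _ => 0 (* degree > 3: not covered by the procedure *)
    end
  end.

(* Main.v *)
Require Import Defs.
From HB Require Import structures.
From mathcomp Require Import all_boot all_order all_algebra zify lra.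
Import Order.TTheory GRing.Theory Num.Theory.
Local Open Scope ring_scope.

Definition ginv (G : graph) (L : lists) : Prop :=
  simple_graph G /\ forall u, u \in gV G -> (deg G u <= 3)%N /\ (deg G u + 1 <= #|L u|)%N.

Lemma nbrs_delv G a u : nbrs (delv G a) u = [seq w <- nbrs G u | w != a].
Proof. by rewrite /nbrs /= -!filter_predI; apply: eq_filter => w /=; rewrite andbC. Qed.

Lemma deg_delv G a u : uniq (gV G) -> (deg (delv G a) u + (a \in nbrs G u) = deg G u)%N.
Proof.
move=> U; rewrite /deg nbrs_delv size_filter.
have Un : uniq (nbrs G u) by apply: filter_uniq.
rewrite -(count_uniq_mem a Un) -(count_predC (pred1 a)) addnC.
by congr (_ + _)%N; apply: eq_count.
Qed.

Lemma nbrs_sym G a u : simple_graph G -> a \in gV G -> u \in gV G ->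
  (u \in nbrs G a) = (a \in nbrs G u).
Proof. by move=> [_ [S _]] Ha Hu; rewrite !mem_filter Ha Hu S. Qed.

Lemma reach_sub G L L' a w :
  ginv G L -> a \in gV G -> w \in nbrs G a -> L' w = L w ->
  (forall u, u \in gV G -> u != a -> (#|L u| <= #|L' u| + (u \in nbrs G a))%N) ->
  reachable (delv G a) L' w.
Proof.
move=> [[U [S I]] H] Ha Hw HL HL'.
have Hw' : w \in gV G by move: Hw; rewrite mem_filter => /andP[].
have Haw : gE G a w by move: Hw; rewrite mem_filter => /andP[].
have wa : w != a by apply/eqP => E; move: Haw; rewrite E I.
split; first by split; [exact: filter_uniq | split].
split; first by rewrite mem_filter wa.
have key : forall u, u \in gV G -> u != a ->
   (deg (delv G a) u <= 3)%N /\ (deg (delv G a) u + 1 <= #|L' u|)%N.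
  move=> u Hu ua; have := deg_delv _ a u U; have := HL' u Hu ua; have := H u Hu.
  rewrite (nbrs_sym _ _ _ (conj U (conj S I)) Ha Hu).
  case: (a \in nbrs G u) => /= ; lia.
split.
  by move=> u; rewrite mem_filter => /andP[ua Hu]; apply: key.
have := deg_delv _ a w U; have := H w Hw'.
have -> : a \in nbrs G w by rewrite -(nbrs_sym _ _ _ (conj U (conj S I)) Ha Hw').
rewrite HL /=; lia.
Qed.

Lemma ginv_delv G L a : ginv G L -> ginv (delv G a) L.
Proof.
move=> [[U [S I]] H]; split; first by split; [exact: filter_uniq | split].
move=> u; rewrite mem_filter => /andP[ua Hu].
have := deg_delv _ a u U; have := H u Hu; case: (a \in nbrs G u) => /=; lia.
Qed.

Lemma reach_ginv G L v : reachable G L v -> ginv G L.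
Proof. by case=> S [_ [H _]]. Qed.

Lemma nth_notin_take (s : seq nat) k : uniq s -> (k < size s)%N -> nth 0%N s k \notin take k s.
Proof.
move=> U Hk; move: U; rewrite -{1}(cat_take_drop k s) cat_uniq => /and3P[_ D _].
apply: contra D => Hin; apply/hasP; exists (nth 0%N s k) => //.
have -> : nth 0%N s k = nth 0%N (drop k s) 0 by rewrite nth_drop addn0.
by apply: mem_nth; rewrite size_drop subn_gt0.
Qed.

Lemma card_restr (L : lists) (s : seq nat) (k : nat) (j : color) (u : nat) : (#|L u| <= #|restr L s k j u| + (u \in take k s))%N.
Proof.
rewrite /restr; case: (u \in take k s) => /=; last by rewrite addn0.
rewrite (cardsD1 j (L u)) addnC; apply: leq_add => //; exact: leq_b1.
Qed.

Definition d2val (Lv Lv1 : {set color}) (d1 : nat) (x : nat -> color -> rat) (y : color -> rat) (i : color) : rat :=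
  let pr (w : color) := \prod_(k < d1) (1 - x k w) in
  let f (j : color) := if j \in Lv1 then pr j / \sum_(w in Lv1) pr w else 0 in
  (1 - f i) * (1 - y i) / \sum_(j in Lv) (1 - f j) * (1 - y j).

Lemma card_color (A : {set color}) : (#|A| <= 4)%N.
Proof. by have := max_card A; rewrite card_ord. Qed.

Lemma pb (a b : rat) : 0 <= a -> 0 <= b <= 1/2 -> a/2 <= a*(1-b) /\ a*(1-b) <= a.
Proof. move=> ha /andP[hb1 hb2]; split; nra. Qed.
Lemma pb2 (a b : rat) : 0 <= a -> 1/13 <= b -> a*(1-b) <= a * (12/13).
Proof. move=> ha hb; nra. Qed.
Lemma pb3 (a b : rat) : 0 < a -> 2%:R <= b -> 0 < a * b.
Proof. move=> ha hb; nra. Qed.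

Lemma d2_final (f y : color -> rat) (i : color) :
  (forall j, 0 <= f j <= 1) -> \sum_(j in [set: color] :\ i) f j = 1 - f i ->
  f i <= 4/7 -> (forall j, 0 <= y j <= 1/2) ->
  let p := (1 - f i) * (1 - y i) / \sum_(j in [set: color]) (1 - f j) * (1 - y j) in
  [/\ 0 <= p, p <= 1/2, 1/13 <= p & ((1/19 <= f i) || (1/13 <= y i) -> p <= 12%:R/25%:R)].
Proof.
move=> Hf Hsum Hfi Hy p.
have c3 : #|[set: color] :\ i| = 3%N.
  by have := cardsD1 i [set: color]; rewrite in_setT cardsT card_ord => /eqP; rewrite eqSS => /eqP.
set R := \sum_(j in [set: color] :\ i) (1 - f j) * (1 - y j).
have Hsub : \sum_(j in [set: color] :\ i) (1 - f j) = 2 + f i.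
  rewrite sumrB Hsum sumr_const c3; lra.
have HR1 : (2 + f i) / 2 <= R.
  rewrite -Hsub mulr_suml; apply: ler_sum => j _.
  have /andP[_ h] := Hf j; have ha : 0 <= 1 - f j by lra.
  exact: (proj1 (pb _ _ ha (Hy j))).
have HR2 : R <= 2 + f i.
  rewrite -Hsub; apply: ler_sum => j _.
  have /andP[_ h] := Hf j; have ha : 0 <= 1 - f j by lra.
  exact: (proj2 (pb _ _ ha (Hy j))).
set N := (1 - f i) * (1 - y i).
have hai : 0 <= 1 - f i by have /andP[_ h] := Hf i; lra.
have [HN1 HN2] : (1 - f i) / 2 <= N /\ N <= 1 - f i by exact: pb _ _ hai (Hy i).
have HN3 : 1/13 <= y i -> N <= (1 - f i) * (12/13) by move=> h; exact: pb2 _ _ hai h.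
have HT : \sum_(j in [set: color]) (1 - f j) * (1 - y j) = N + R.
  by rewrite (big_setD1 i) ?in_setT.
have Hfi0 := Hf i.
have Tpos : 0 < N + R by lra.
rewrite /p HT -/N; split.
- apply: divr_ge0; lra.
- rewrite (ler_pdivrMr _ _ Tpos); lra.
- rewrite (ler_pdivlMr _ _ Tpos); lra.
- case/orP => h; rewrite (ler_pdivrMr _ _ Tpos).
    lra.
  have := HN3 h; lra.
Qed.

Lemma d2_bound (Lv Lv1 : {set color}) (d1 : nat) (x : nat -> color -> rat) (y : color -> rat) (i : color) :
  Lv = setT -> (d1 + 2 <= #|Lv1|)%N -> (d1 <= 2)%N ->
  (forall k w, (k < d1)%N -> 0 <= x k w <= 1/2) -> (forall j, 0 <= y j <= 1/2) ->
  let p := d2val Lv Lv1 d1 x y i in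
  [/\ 0 <= p, p <= 1/2, 1/13 <= p & ((i \in Lv1) || (1/13 <= y i) -> p <= 12%:R/25%:R)].
Proof.
move=> HLv Hc Hd Hx Hy; rewrite /d2val HLv.
set pr := fun w : color => \prod_(k < d1) (1 - x k w).
set c : rat := (1/2) ^+ d1.
have hc : 1/4 <= c /\ 3/4 <= c * (#|Lv1| - 1)%N%:R.
  have h4 := card_color Lv1.
  rewrite /c; case: d1 Hc Hd {Hx pr c} => [|[|[|d]]] Hc Hd /=; rewrite ?expr0 ?expr1 ?expr2.
  - split; first lra. have : (1 <= (#|Lv1| - 1)%N)%N by lia.
    rewrite -(ler_nat rat); lra.
  - split; first lra. have : (2 <= (#|Lv1| - 1)%N)%N by lia.
    rewrite -(ler_nat rat); lra.
  - split; first lra. have : (3 <= (#|Lv1| - 1)%N)%N by lia.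
    rewrite -(ler_nat rat); lra.
  - lia.
have hpr : forall w, c <= pr w <= 1.
  move=> w; apply/andP; split.
    rewrite /c /pr -[X in X <= _](_ : \prod_(k < d1) (1/2 : rat) = _); last first.
      by rewrite -(big_mkord xpredT (fun _ => 1/2 : rat)) prodr_const_nat subn0.
    by apply: ler_prod => k _; have := Hx k w (ltn_ord k); lra.
  apply: (@le_trans _ _ (\prod_(k < d1) (1:rat))); last by rewrite big1_eq.
  by apply: ler_prod => k _; have := Hx k w (ltn_ord k); lra.
set S := \sum_(w in Lv1) pr w.
have hS : forall j, j \in Lv1 -> exists R, [/\ S = pr j + R, 3/4 <= R & R <= 3].
  move=> j Hj; exists (\sum_(w in Lv1 :\ j) pr w); split.
  - by rewrite /S (big_setD1 j Hj).
  - apply: (le_trans (proj2 hc)).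
    have E : c * (#|Lv1| - 1)%N%:R = \sum_(w in Lv1 :\ j) c.
      rewrite sumr_const mulr_natr (cardsD1 j Lv1) Hj; congr (_ *+ _); lia.
    rewrite E; apply: ler_sum => w _; by case/andP: (hpr w).
  - have E : \sum_(w in Lv1 :\ j) (1:rat) <= 3.
      rewrite sumr_const; have := card_color Lv1; rewrite (cardsD1 j Lv1) Hj.
      move=> h; rewrite -mulr_natr mul1r ler_nat; lia.
    apply: le_trans E; apply: ler_sum => w _; by case/andP: (hpr w).
have Spos : 0 < S.
  apply: (@lt_le_trans _ _ (c *+ #|Lv1|)).
    rewrite -mulr_natr; have : (2 <= #|Lv1|)%N by lia.
    rewrite -(ler_nat rat) => h2; apply: (pb3 _ _ _ h2); have := proj1 hc; lra.
  rewrite -sumr_const; apply: ler_sum => w _; by case/andP: (hpr w).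
set f := fun j => if j \in Lv1 then pr j / S else 0.
have Hf : forall j, 0 <= f j <= 1.
  move=> j; rewrite /f; case: ifP => Hj; last by rewrite lexx ler01.
  have [R [ES h1 h2]] := hS j Hj; have /andP[h4 h5] := hpr j; have h3 := proj1 hc.
  apply/andP; split; first by apply: divr_ge0; lra.
  rewrite (ler_pdivrMr _ _ Spos); lra.
have Hsum : \sum_(j in [set: color] :\ i) f j = 1 - f i.
  have E1 : \sum_(j in [set: color]) f j = 1.
    have -> : \sum_(j in [set: color]) f j = \sum_(j in Lv1) pr j / S.
      rewrite [RHS]big_mkcond [LHS]big_mkcond; apply: eq_bigr => j _; by rewrite in_setT.
    by rewrite -mulr_suml divff; last by rewrite gt_eqF.
  have E2 : f i + \sum_(j in [set: color] :\ i) f j = 1.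
    by rewrite -[RHS]E1 (big_setD1 (A := [set: color]) i) ?in_setT.
  lra.
have Hfi : f i <= 4/7 /\ (i \in Lv1 -> 1/19 <= f i).
  rewrite /f; case: ifP => Hi; last by split; [lra|].
  have [R [ES h1 h2]] := hS i Hi; have /andP[h4 h5] := hpr i; have h3 := proj1 hc.
  split => [|_].
    rewrite (ler_pdivrMr _ _ Spos); lra.
  rewrite (ler_pdivlMr _ _ Spos); lra.
have := d2_final f y i Hf Hsum (proj1 Hfi) Hy.
case=> h1 h2 h3 h4; split; [exact: h1|exact: h2|exact: h3|] => H; apply: h4.
case/orP: H => H; last by rewrite H orbT.
by rewrite (proj2 Hfi H).
Qed.



Lemma inv_bounds (n d : nat) : (d <= 2)%N -> (d + 2 <= n)%N -> (n <= 4)%N ->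
  [/\ 0 <= (n%:R : rat)^-1, (n%:R:rat)^-1 <= 1/2, 1/13 <= (n%:R:rat)^-1,
      (d = 2%N -> (n%:R : rat)^-1 <= 12%:R/25%:R) & (d = 1%N -> (n%:R:rat)^-1 <= 6%:R/13%:R)].
Proof.
move=> h1 h2 h3.
have e1 : (12%:R/25%:R : rat) = 12/25 by [].
have e2 : (6%:R/13%:R : rat) = 6/13 by [].
rewrite e1 e2.
case: n h2 h3 => [|[|[|[|[|n]]]]] h2 h3; try lia.
- split; try lra; move=> E; lia.
- split; try lra; move=> E; lia.
- split; lra.
Qed.

Lemma mem_size1 (s : seq nat) u : size s = 1%N -> u \in s -> u = nth 0%N s 0.
Proof. by case: s => [|a [|b t]] //= _; rewrite inE => /eqP. Qed.

Lemma mem_size2 (s : seq nat) u : size s = 2%N -> u \in s -> u = nth 0%N s 0 \/ u = nth 0%N s 1.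
Proof.
case: s => [|a [|b [|c t]]] //= _; rewrite !inE => /orP[] /eqP ->; by [left|right].
Qed.

Lemma restr_sub (L : lists) (s : seq nat) (k : nat) (j : color) (u : nat) (A : seq nat) :
  {subset take k s <= A} -> (#|L u| <= #|restr L s k j u| + (u \in A))%N.
Proof.
move=> H; apply: (leq_trans (card_restr L s k j u)); rewrite leq_add2l.
by case: (boolP (u \in take k s)) => h //; rewrite (H _ h).
Qed.

Lemma P_notin ord D G (L : lists) v (i : color) : i \notin L v -> P ord D G L v i = 0.
Proof. by move=> H; case: D => [|D] /=; rewrite H. Qed.

Lemma notin_case ord D G (L : lists) v (i : color) : i \notin L v ->
  [/\ 0 <= P ord D G L v i, P ord D G L v i <= 1/2,
      (i \in L v -> 1/13 <= P ord D G L v i) &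
      ((exists2 u, u \in nbrs G v & i \in L u) ->
        (deg G v = 2%N -> P ord D G L v i <= 12%:R/25%:R) /\
        (deg G v = 1%N -> P ord D G L v i <= 6%:R/13%:R))].
Proof.
move=> Hi; rewrite (P_notin ord D G L v i Hi).
have e1 : (12%:R/25%:R : rat) = 12/25 by [].
have e2 : (6%:R/13%:R : rat) = 6/13 by [].
rewrite e1 e2; split.
- exact: lexx.
- lra.
- by rewrite (negbTE Hi).
- by move=> _; split => _; lra.
Qed.

Lemma P0E ord G (L : lists) v (i : color) : i \in L v -> P ord 0 G L v i = (#|L v|%:R)^-1.
Proof.
move=> H; change (P ord 0 G L v i) with (if i \notin L v then 0 else (#|L v|%:R)^-1 : rat).
by rewrite H.
Qed.
Lemma PS0E ord D G (L : lists) v (i : color) : i \in L v -> deg G v = 0%N -> P ord D.+1 G L v i = (#|L v|%:R)^-1.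
Proof.
move=> H Hd; rewrite [LHS]/= H Hd.
by [].
Qed.
Lemma PS14E ord D G (L : lists) v (i : color) : i \in L v -> deg G v = 1%N -> #|L v| = 4%N ->
  P ord D.+1 G L v i = (1 - P ord D (delv G v) L (nth 0%N (ord G v) 0) i) / 3.
Proof. by move=> H Hd H4; rewrite [LHS]/= H Hd H4. Qed.
Lemma PS13E ord D G (L : lists) v (i : color) : i \in L v -> deg G v = 1%N -> #|L v| = 3%N ->
  P ord D.+1 G L v i = (1 - P ord D (delv G v) L (nth 0%N (ord G v) 0) i) /
     (2 + P ord D (delv G v) L (nth 0%N (ord G v) 0) (odflt i [pick j in ~: L v])).
Proof. by move=> H Hd H4; rewrite [LHS]/= H Hd H4. Qed.
Lemma PS2E ord D G (L : lists) v (i : color) (v1 v2 : nat) : i \in L v -> deg G v = 2%N ->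
  v1 = (if (deg G (nth 0%N (ord G v) 1) <= deg G (nth 0%N (ord G v) 0))%N &&
           (((deg G (nth 0%N (ord G v) 0) == 1%N) && (deg G (nth 0%N (ord G v) 1) == 1%N)) ==>
            ((i \notin L (nth 0%N (ord G v) 0)) ==> (i \notin L (nth 0%N (ord G v) 1))))
        then nth 0%N (ord G v) 0 else nth 0%N (ord G v) 1) ->
  v2 = (if (deg G (nth 0%N (ord G v) 1) <= deg G (nth 0%N (ord G v) 0))%N &&
           (((deg G (nth 0%N (ord G v) 0) == 1%N) && (deg G (nth 0%N (ord G v) 1) == 1%N)) ==>
            ((i \notin L (nth 0%N (ord G v) 0)) ==> (i \notin L (nth 0%N (ord G v) 1))))
        then nth 0%N (ord G v) 1 else nth 0%N (ord G v) 0) ->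
  P ord D.+1 G L v i = d2val (L v) (L v1) (deg (delv G v) v1)
   (fun k w => P ord D (delv (delv G v) v1) (restr L (ord (delv G v) v1) k w) (nth 0%N (ord (delv G v) v1) k) w)
   (fun j => P ord D (delv G v) (restr L [:: v1; v2] 1 j) v2 j) i.
Proof. by move=> H Hd -> ->; rewrite [LHS]/= H Hd. Qed.
Lemma arith1 (a b c : nat) : (a + 1 = b -> b <= 3 -> b + 1 <= c -> (a + 2 <= c) && (a <= 2))%N.
Proof. move=> *; apply/andP; split; lia. Qed.
Lemma arith2 (n : nat) : (1 + 2 <= n -> n <= 4 -> n = 3 \/ n = 4)%N.
Proof. lia. Qed.

Lemma mainlem (ord : order_oracle) (Hord : valid_oracle ord) (D : nat) :
  forall (G : graph) (L : lists) (v : nat), reachable G L v -> forall i : color,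
  [/\ 0 <= P ord D G L v i, P ord D G L v i <= 1/2,
      (i \in L v -> 1/13 <= P ord D G L v i) &
      ((exists2 u, u \in nbrs G v & i \in L u) ->
        (deg G v = 2%N -> P ord D G L v i <= 12%:R/25%:R) /\
        (deg G v = 1%N -> P ord D G L v i <= 6%:R/13%:R))].
Proof.
have e1 : (12%:R/25%:R : rat) = 12/25 by [].
have e2 : (6%:R/13%:R : rat) = 6/13 by [].
elim: D => [|D IH] G L v Hr i; (case/orP: (orbN (i \in L v)) => Hi; last exact: (notin_case ord _ G L v i Hi));
  have [[U [Sy Ir]] [Hv [Hall [Hdv HLv]]]] := Hr; have HL4 := card_color (L v).
  rewrite (P0E ord G L v i Hi).
  have [h1 h2 h3 h4 h5] := inv_bounds _ _ Hdv HLv HL4.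
  split; [exact: h1|exact: h2|by move=> _; exact: h3|by move=> _; split].
have Hg := reach_ginv _ _ _ Hr.
have Hs : perm_eq (ord G v) (nbrs G v) := Hord G v.
have Hsz : size (ord G v) = deg G v by rewrite (perm_size Hs).
move: (Hdv); case Hd: (deg G v) => [|[|[|d]]] _.
- rewrite (PS0E ord D G L v i Hi Hd).
  have [h1 h2 h3 h4 h5] := inv_bounds _ _ Hdv HLv HL4.
  split; [exact: h1|exact: h2|by move=> _; exact: h3|by move=> _; split=> E; discriminate E].
-
  pose v1 := nth 0%N (ord G v) 0.
  have Hv1 : v1 \in nbrs G v.
    rewrite -(perm_mem Hs); apply: mem_nth; rewrite Hsz Hd; exact: isT.
  have Hr1 : reachable (delv G v) L v1 :=
    reach_sub _ _ _ _ _ Hg Hv Hv1 erefl (fun u _ _ => leq_addr _ _).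
  have HB := IH _ _ _ Hr1.
  have [x0 x1 x2 _] := HB i.
  have Hx3 : (exists2 u, u \in nbrs G v & i \in L u) -> 1/13 <= P ord D (delv G v) L v1 i.
    case=> u Hu HiL; apply: x2.
    have : u \in ord G v by rewrite (perm_mem Hs).
    move/(mem_size1 _ _ (etrans Hsz Hd)) => Eu; rewrite /v1 -Eu; exact: HiL.
  rewrite Hd in HLv.
  have : #|L v| = 3%N \/ #|L v| = 4%N by exact: arith2 _ HLv HL4.
  case=> H34.
  + rewrite (PS13E ord D G L v i Hi Hd H34) -/v1.
    have [y0 y1 _ _] := HB (odflt i [pick j in ~: L v]).
    have ypos : 0 < 2 + P ord D (delv G v) L v1 (odflt i [pick j in ~: L v]) by lra.
    split.
    * apply: divr_ge0; lra.
    * rewrite (ler_pdivrMr _ _ ypos); lra.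
    * move=> _; rewrite (ler_pdivlMr _ _ ypos); lra.
    * move=> Hex; split => Hdd; first (exfalso; move: Hdd; discriminate).
      have := Hx3 Hex; rewrite e2 (ler_pdivrMr _ _ ypos); lra.
  + rewrite (PS14E ord D G L v i Hi Hd H34) -/v1.
    split.
    * lra.
    * lra.
    * move=> _; lra.
    * move=> Hex; split => Hdd; first (exfalso; move: Hdd; discriminate).
      rewrite e2; lra.
-
  have Hsz2 : size (ord G v) = 2%N by rewrite Hsz Hd.
  have Hun : uniq (ord G v) by rewrite (perm_uniq Hs); apply: filter_uniq.
  pose a := nth 0%N (ord G v) 0. pose b := nth 0%N (ord G v) 1.
  have Ha : a \in nbrs G v.
    rewrite -(perm_mem Hs); apply: mem_nth; rewrite Hsz2; exact: isT.
  have Hb : b \in nbrs G v.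
    rewrite -(perm_mem Hs); apply: mem_nth; rewrite Hsz2; exact: isT.
  have Hab : a != b by rewrite /a /b nth_uniq ?Hsz2.
  pose ok := (deg G b <= deg G a)%N &&
                (((deg G a == 1%N) && (deg G b == 1%N)) ==>
                 ((i \notin L a) ==> (i \notin L b))).
  pose v1 := if ok then a else b. pose v2 := if ok then b else a.
  rewrite (PS2E ord D G L v i v1 v2 Hi Hd erefl erefl).
  have [Hv1 Hv2 Hne] : [/\ v1 \in nbrs G v, v2 \in nbrs G v & v1 != v2].
    rewrite /v1 /v2; case: ifP => _; (split; [assumption|assumption|]); [exact: Hab | rewrite eq_sym; exact: Hab].
  have Hv1G : v1 \in gV G by move: Hv1; rewrite mem_filter => /andP[].
  have HvE : gE G v v1 by move: Hv1; rewrite mem_filter => /andP[].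
  have HL'v2 : forall j, restr L [:: v1; v2] 1 j v2 = L v2.
    by move=> j; rewrite /restr /= inE eq_sym (negbTE Hne).
  have Hry : forall j, reachable (delv G v) (restr L [:: v1; v2] 1 j) v2.
    move=> j; apply: (reach_sub _ _ _ _ _ Hg Hv Hv2 (HL'v2 j)) => u _ _.
    apply: restr_sub => x; rewrite /= inE => /eqP ->; exact: Hv1.
  pose G1 := delv G v.
  have Hg1 : ginv G1 L := ginv_delv _ _ v Hg.
  have Hv1G1 : v1 \in gV G1.
    rewrite mem_filter Hv1G andbT; apply/eqP => E; move: HvE; rewrite E Ir; exact: id.
  have Hus : perm_eq (ord G1 v1) (nbrs G1 v1) := Hord G1 v1.
  have Husz : size (ord G1 v1) = deg G1 v1 by rewrite (perm_size Hus).
  have Husu : uniq (ord G1 v1) by rewrite (perm_uniq Hus); apply: filter_uniq; apply: filter_uniq.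
  have Hrx : forall k w, (k < deg G1 v1)%N ->
      reachable (delv G1 v1) (restr L (ord G1 v1) k w) (nth 0%N (ord G1 v1) k).
    move=> k w hk.
    have hk' : (k < size (ord G1 v1))%N by rewrite Husz.
    apply: (reach_sub _ _ _ _ _ Hg1 Hv1G1).
    - rewrite -(perm_mem Hus); exact: mem_nth.
    - by rewrite /restr (negbTE (nth_notin_take _ _ Husu hk')).
    - move=> u _ _; apply: restr_sub => x hx; rewrite -(perm_mem Hus); exact: mem_take hx.
  have Hdeg1 : (deg G1 v1 + 1 = deg G v1)%N.
    have := deg_delv G v v1 U.
    by rewrite -(nbrs_sym G v v1 (conj U (conj Sy Ir)) Hv Hv1G) Hv1.
  have [Hv13 HLv1] := Hall v1 Hv1G.
  have /andP[Hc1 Hd1] := arith1 _ _ _ Hdeg1 Hv13 HLv1.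
  have HLvT : L v = setT.
    apply/eqP; rewrite eqEcard subsetT cardsT card_ord; rewrite Hd in HLv; exact: HLv.
  have HX : forall k w, (k < deg G1 v1)%N ->
      0 <= P ord D (delv G1 v1) (restr L (ord G1 v1) k w) (nth 0%N (ord G1 v1) k) w <= 1/2.
    move=> k w hk; have [h0 h1 _ _] := IH _ _ _ (Hrx k w hk) w; apply/andP; split; [exact: h0|exact: h1].
  have HY : forall j, 0 <= P ord D (delv G v) (restr L [:: v1; v2] 1 j) v2 j <= 1/2.
    move=> j; have [h0 h1 _ _] := IH _ _ _ (Hry j) j; apply/andP; split; [exact: h0|exact: h1].
  have [h1 h2 h3 h4] := d2_bound (L v) (L v1) (deg G1 v1)
     (fun k w => P ord D (delv G1 v1) (restr L (ord G1 v1) k w) (nth 0%N (ord G1 v1) k) w)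
     (fun j => P ord D (delv G v) (restr L [:: v1; v2] 1 j) v2 j) i HLvT Hc1 Hd1 HX HY.
  split; [exact: h1|exact: h2|move=> _; exact: h3|].
  move=> [u Hu HiL]; split => Hdd; last (exfalso; move: Hdd; discriminate).
  apply: h4.
  have Huv : u = v1 \/ u = v2.
    have : u \in ord G v by rewrite (perm_mem Hs).
    case/(mem_size2 _ _ Hsz2) => Eu'; rewrite /v1 /v2; case: ifP => _; [left|right|right|left]; exact: Eu'.
  case: Huv => Eu; first by rewrite -Eu HiL.
  apply/orP; right.
  have [_ _ h _] := IH _ _ _ (Hry i) i; apply: h; rewrite HL'v2 -Eu; exact: HiL.
- exfalso; move: Hdv; rewrite Hd; done.
Qed.



Theorem proposition9 (ord : order_oracle) (G : graph) (L : lists) (v : nat)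
  (D : nat) :
  valid_oracle ord -> reachable G L v ->
  forall i : color, (exists2 u, u \in nbrs G v & i \in L u) ->
    (deg G v = 2%N -> P ord D G L v i <= 12%:R / 25%:R) /\
    (deg G v = 1%N -> P ord D G L v i <= 6%:R / 13%:R).
Proof.
move=> Hord Hr i Hex.
have [_ _ _ h] := mainlem ord Hord D G L v Hr i.
exact: h Hex.
Qed.
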